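(* Let $\ell>0$, $r>0$, $\lambda>0$, and let $G$ be a probability distribution on $[0,\infty)$ with finite mean. The greedy polling population process $W$ (described in the context) is $\phi$-irreducible and strongly aperiodic, where $\phi$ is the Dirac measure on $M_+(S)$ assigning unit mass to the zero counting measure. Moreover, for every integer $n\ge 0$, the level set $C_n=\{\zeta\in M_+(S):\|\zeta\|\le n\}$ is small for $W$.
   Context: $S$ is the circle of circumference $\ell$ with shortest-arc distance $d$ and uniform probability distribution $m$; $B_\rho(x)=\{y: d(x,y)<\rho\}$. $M_+(S)$ is the set of finite counting measures on $S$ with the sigma-algebra generated by $\zeta\mapsto\zeta(B)$; $\|\zeta\|=\zeta(S)$. For $x\in\zeta$ (i.e. $\zeta(\{x\})>0$), $\Gamma_\zeta(x)=\{y: d(x,y)<d(x',y)\ \forall x'\in\zeta,\ x'\ne x\}$. $W$ is the Markov chain on $M_+(S)$ with the following transition from $W_t=\zeta$: add $N$ customers at i.i.d. $m$-distributed locations, $P(N=n)=\int e^{-\lambda s}\frac{(\lambda s)^n}{n!}G(ds)$, giving $\zeta'$; then choose $U$ uniform on $S$; if $\zeta'(B_r(U))=0$ nothing changes, otherwise one customer at the atom of $\zeta'$ nearest to $U$ is removed (equivalently, for each $x\in\zeta'$ one customer at $x$ is removed with probability $m(B_r(x)\cap\Gamma_{\zeta'}(x))$). Irreducibility, strong aperiodicity and small sets are in the sense of Meyn and Tweedie: a set $C$ is small if there exist $k\ge1$ and a nonzero measure $\nu$ with $P^k(\zeta,B)\ge\nu(B)$ for all $\zeta\in C$ and measurable $B$.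 *)

(* Defs.v *)
From HB Require Import structures.
From mathcomp Require Import all_boot all_order all_algebra.
From mathcomp Require Import all_classical all_reals all_analysis.
Set Implicit Arguments.
Unset Strict Implicit.
Unset Printing Implicit Defensive.
Import Order.TTheory GRing.Theory Num.Theory.
Import numFieldNormedType.Exports.
Local Open Scope classical_set_scope.
Local Open Scope ring_scope.

(* The circle S of circumference l is represented by the points of [0, l)
   (coordinate along the circle); m is Lebesgue measure on [0,l) divided by l. *)

Section Greedy.
Variable R : realType.

Definition inS (l : R) (x : R) : bool := (0 <= x) && (x < l).

Definition cdist (l : R) (x y : R) : R := Num.min `|x - y| (l - `|x - y|).

Definition Sset (l : R) : set R := [set x | inS l x].

Definition unif (l : R) (A : set R) : \bar R :=
  ((l^-1)%:E * (@lebesgue_measure R) (A `&` Sset l))%E.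

(* finite counting measures on S: multiplicity functions with finite
   support contained in S *)
Record cm (l : R) := CM {
  cm_f : R -> nat ;
  cm_fin : exists s : seq R, forall x, cm_f x != 0%N -> x \in s ;
  cm_rng : forall x, cm_f x != 0%N -> inS l x }.

Variable l : R.

Definition cm_count (z : cm l) (B : set R) : nat :=
  \big[addn/0%N]_(x \in B) cm_f z x.

Definition cm_norm (z : cm l) : nat := cm_count z [set x | inS l x].

Definition cm_supp (z : cm l) : set R := [set x | cm_f z x != 0%N].

Lemma cm0_fin : exists s : seq R, forall x, (fun _ : R => 0%N) x != 0%N -> x \in s.
Proof. by exists [::]. Qed.
Lemma cm0_rng : forall x, (fun _ : R => 0%N) x != 0%N -> inS l x.
Proof. by []. Qed.
Definition cm0 : cm l := CM cm0_fin cm0_rng.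

Lemma cm_add_fin (z : cm l) (x : R) : exists s : seq R,
  forall y, (cm_f z y + ((y == x) && inS l x))%N != 0%N -> y \in s.
Proof.
case: (cm_fin z) => s hs; exists (x :: s) => y; rewrite in_cons.
have [-> //|ne] := eqVneq y x; rewrite /= addn0; exact: hs.
Qed.
Lemma cm_add_rng (z : cm l) (x : R) :
  forall y, (cm_f z y + ((y == x) && inS l x))%N != 0%N -> inS l y.
Proof.
move=> y; have [->|ne] := eqVneq y x; rewrite /=.
  case hx: (inS l x) => //=; rewrite addn0 => h; by have := cm_rng h; rewrite hx.
by rewrite addn0 => h; exact: (cm_rng h).
Qed.
(* zeta + delta_x (only if x lies on S; otherwise zeta unchanged) *)
Definition cm_add (z : cm l) (x : R) : cm l := CM (cm_add_fin z x) (@cm_add_rng z x).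

Lemma cm_rem_fin (z : cm l) (x : R) : exists s : seq R,
  forall y, (cm_f z y - (y == x))%N != 0%N -> y \in s.
Proof.
case: (cm_fin z) => s hs; exists s => y h; apply: hs.
by apply: contraNneq h => ->.
Qed.
Lemma cm_rem_rng (z : cm l) (x : R) :
  forall y, (cm_f z y - (y == x))%N != 0%N -> inS l y.
Proof. by move=> y h; apply: (@cm_rng _ z); apply: contraNneq h => ->. Qed.
Definition cm_rem (z : cm l) (x : R) : cm l := CM (cm_rem_fin z x) (@cm_rem_rng z x).

Definition cm_gen : set (set (cm l)) :=
  [set A | exists B : set R, exists k : nat,
     measurable B /\ B `<=` [set x | inS l x] /\ A = [set z | cm_count z B = k]].
Definition cm_meas : set (set (cm l)) := <<s cm_gen >>.

Variables (r lam : R) (G : probability R R).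

Definition cball (x : R) : set R := [set y | inS l y /\ cdist l x y < r].

Definition vcell (z : cm l) (x : R) : set R :=
  [set y | inS l y /\ forall x', cm_f z x' != 0%N -> x' != x ->
       cdist l x y < cdist l x' y].

(* probability that the customer removed is the one at atom x *)
Definition qrem (z : cm l) (x : R) : \bar R := unif l (cball x `&` vcell z x).

Definition pN (n : nat) : \bar R :=
  (\int[G]_s (expR (- (lam * s)) * (lam * s) ^+ n / (n`!)%:R)%:E)%E.

Local Open Scope ereal_scope.

(* effect of the removal step on a nonnegative test function g *)
Definition remop (g : cm l -> \bar R) (z : cm l) : \bar R :=
  \big[adde/0]_(x \in cm_supp z) (qrem z x * g (cm_rem z x))
  + (1 - \big[adde/0]_(x \in cm_supp z) qrem z x) * g z.

(* effect of adding n customers at i.i.d. m-distributed locations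
   (m = Lebesgue measure on [0,l) normalised by 1/l) *)
Fixpoint addop (n : nat) (g : cm l -> \bar R) (z : cm l) : \bar R :=
  match n with
  | 0%N => g z
  | n'.+1 => (l^-1)%:E *
      \int[@lebesgue_measure R]_(x in Sset l) addop n' g (cm_add z x)
  end.

(* one-step transition operator: (P g)(zeta) = E[g(W_1) | W_0 = zeta] *)
Definition Pop (g : cm l -> \bar R) (z : cm l) : \bar R :=
  \sum_(n <oo) (pN n * addop n (remop g) z).

Definition Pk (k : nat) (z : cm l) (B : set (cm l)) : \bar R :=
  iter k Pop (fun y => (\1_B y)%:E) z.

Definition is_measure_on (T : Type) (M : set (set T)) (nu : set T -> \bar R) :=
  nu set0 = 0 /\ (forall A, M A -> 0 <= nu A) /\
  (forall F : nat -> set T, (forall i, M (F i)) -> trivIset setT F ->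
     (fun n => \sum_(i < n) nu (F i)) @ \oo --> nu (\bigcup_i F i)).

Definition small_set (C : set (cm l)) : Prop :=
  cm_meas C /\
  exists k : nat, (1 <= k)%N /\ exists nu : set (cm l) -> \bar R,
    is_measure_on cm_meas nu /\ (exists B, cm_meas B /\ 0 < nu B) /\
    forall z B, C z -> cm_meas B -> nu B <= Pk k z B.

Definition phi_irreducible (phi : set (cm l) -> \bar R) : Prop :=
  forall B, cm_meas B -> 0 < phi B ->
    forall z, exists n : nat, (1 <= n)%N /\ 0 < Pk n z B.

Definition strongly_aperiodic : Prop :=
  exists C, cm_meas C /\ exists nu : set (cm l) -> \bar R,
    is_measure_on cm_meas nu /\ 0 < nu C /\
    forall z B, C z -> cm_meas B -> nu B <= Pk 1 z B.

Definition dirac_cm0 (B : set (cm l)) : \bar R := (\1_B cm0)%:E.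

End Greedy.

Arguments phi_irreducible {R} l r lam G phi.
Arguments strongly_aperiodic {R} l r lam G.
Arguments small_set {R} l r lam G C.
Arguments dirac_cm0 {R} l B.
Arguments Pk {R} l r lam G k z B.

(* Main.v *)
Require Import Defs.
From mathcomp Require Import all_boot all_order all_algebra.
From mathcomp Require Import all_classical all_reals all_analysis.
From mathcomp Require Import measurable_realfun.
From mathcomp Require Import lra.
Import Order.TTheory GRing.Theory Num.Theory.
Local Open Scope classical_set_scope.
Local Open Scope ring_scope.

Section P1.
Variables (R : realType) (l : R).

Lemma inS_itv1 : [set x | inS l x] = `[0, l[%classic.
Proof. by apply/seteqP; split => x; rewrite /= in_itv. Qed.

Lemma meas_S1 : measurable [set x : R | inS l x].
Proof. by rewrite inS_itv1; exact: measurable_itv. Qed.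

Lemma level_meas n : @cm_meas R l [set z | (cm_norm z <= n)%N].
Proof.
have -> : [set z : cm l | (cm_norm z <= n)%N] =
  \bigcup_k (if (k <= n)%N then [set z : cm l | cm_count z [set x | inS l x] = k] else set0).
  apply/seteqP; split => z /=.
    by move=> h; exists (cm_norm z) => //; rewrite h.
  by move=> [k _]; case: ifP => // kn /= h; rewrite /cm_norm h.
apply: sigma_algebra_bigcup => k; case: ifP => _.
  have H : @cm_gen R l [set z : cm l | cm_count z [set x | inS l x] = k].
    by exists [set x | inS l x], k; split; [exact: meas_S1|by split].
  exact: (@sub_gen_smallest _ (sigma_algebra setT) (@cm_gen R l) _ H).
have := smallest_sigma_algebra setT (@cm_gen R l); by case.
Qed.

Lemma dirac_meas (a : R) : 0 <= a ->
  is_measure_on (@cm_meas R l) (fun B => (a%:E * dirac_cm0 l B)%E).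
Proof.
move=> a0; split; first by rewrite /dirac_cm0 indicE memNset // mule0.
split; first by move=> A _; rewrite /dirac_cm0 mule_ge0 // lee_fin indic_ge0.
move=> F _ tF.
have [[j Fj]|nF] := pselect (exists j, F j (cm0 l)).
- have U : (\bigcup_i F i) (cm0 l) by exists j.
  rewrite /dirac_cm0 indicE mem_set //= mule1.
  apply: cvg_near_cst; near=> k.
  have jk : (j < k)%N by near: k; exists j.+1 => // m /=.
  rewrite (bigD1 (Ordinal jk)) //= indicE mem_set //= mule1 big1 ?adde0 //.
  move=> i /eqP ij; rewrite indicE memNset ?mule0 //.
  move=> Fi; apply: ij; apply: val_inj => /=.
  by apply: (tF i j) => //; exists (cm0 l).
- have U : ~ (\bigcup_i F i) (cm0 l) by move=> [i _ Fi]; apply: nF; exists i.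
  rewrite /dirac_cm0 indicE memNset //= mule0.
  apply: cvg_near_cst; near=> k.
  by rewrite big1 // => i _; rewrite indicE memNset ?mule0 // => Fi; apply: nF; exists i.
Unshelve. all: by end_near.
Qed.

End P1.

Section P2.
Variables (R : realType) (lam : R) (G : probability R R).
Hypothesis lam_gt0 : 0 < lam.
Hypothesis G0 : G `[0, +oo[%classic = 1%E.

Definition fN n := fun s : R => (expR (- (lam * s)) * (lam * s) ^+ n / (n`!)%:R)%:E.

Lemma meas_fN n : measurable_fun setT (fN n).
Proof.
apply/measurable_EFinP => /=.
have h1 : measurable_fun setT (fun s : R => lam * s).
  have -> : (fun s : R => lam * s) = ( *%R^~ lam) by apply: funext => s; rewrite mulrC.
  exact: mulrr_measurable.
apply: measurable_funM; [apply: measurable_funM|exact: measurable_cst].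
- exact: (measurableT_comp (@measurable_expR R) (measurable_funN h1)).
- exact: measurable_funX h1.
Qed.

Lemma setT_split : [set: R] = `[0, +oo[%classic `|` `]-oo, 0[%classic.
Proof.
apply/seteqP; split => x //= _.
rewrite /= !in_itv /= andbT; case: (leP 0 x) => h; [by left|by right].
Qed.

Lemma G_neg : G `]-oo, 0[%classic = 0%E.
Proof.
have := probability_setT G; rewrite setT_split measureU //; last first.
  apply/seteqP; split => x //= [];  rewrite !in_itv /= andbT => h1 h2.
  by move: (le_lt_trans h1 h2); rewrite ltxx.
move=> h.
have h2 : (G (`]-oo, 0%R[%classic : set R) + 1 = 0 + 1)%E.
  by rewrite add0e addeC -[X in (X + _)%E]G0; exact: h.
by move: h2 => /(congr1 (fun t => t - 1)%E) /=; rewrite !addeK.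
Qed.

Lemma pN_split n : pN lam G n = (\int[G]_(s in `[0%R, +oo[%classic) fN n s)%E.
Proof.
rewrite /pN -/(fN n) setT_split integral_setU //; last 2 first.
- by apply: measurable_funS (meas_fN n).
- apply/disj_setPS => x [] /=; rewrite !in_itv /= andbT => h1 h2.
  by move: (le_lt_trans h1 h2); rewrite ltxx.
rewrite [X in (_ + X)%E = _]null_set_integral ?adde0 //; first by apply: measurable_funS (meas_fN n).
exact: G_neg.
Qed.

Lemma pN_ge0 n : (0 <= pN lam G n)%E.
Proof.
rewrite pN_split; apply: integral_ge0 => s /=; rewrite in_itv /= andbT => s0.
rewrite lee_fin /fN; apply: mulr_ge0; last by rewrite invr_ge0.
apply: mulr_ge0; first exact: expR_ge0.
by apply: exprn_ge0; apply: mulr_ge0 => //; exact: ltW.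
Qed.

Lemma pN0_pos : exists p0 : R, 0 < p0 /\ (p0%:E <= pN lam G 0)%E.
Proof.
have [M GM] : exists M : nat, (0 < G `[0%R, M%:R%R]%classic)%E.
  apply: contrapT => /forallNP H.
  have H0 : forall k : nat, G `[0, k%:R]%classic = 0%E.
    move=> k; apply/eqP; rewrite eq_le measure_ge0 andbT.
    by rewrite leNgt; apply/negP => h; apply: (H k).
  have : (G `[0%R, +oo[%classic <= \sum_(k <oo) G `[0%R, k%:R%R]%classic)%E.
    apply: measure_sigma_subadditive => //.
    move=> x /=; rewrite in_itv /= andbT => x0.
    exists (Num.truncn x).+1 => //=; rewrite in_itv /= x0 /=.
    by apply: ltW; rewrite truncnS_gt.
  under eq_eseriesr do rewrite H0.
  by rewrite eseries0 // G0 lee_fin ler10.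
have Mfin : G `[0%R, M%:R%R]%classic \is a fin_num.
  rewrite ge0_fin_numE ?measure_ge0 //.
  by apply: (le_lt_trans (probability_le1 _ _)) => //; exact: ltry.
exists (expR (- (lam * M%:R)) * fine (G `[0, M%:R]%classic)); split.
  by apply: mulr_gt0; [exact: expR_gt0|rewrite fine_gt0 // GM /= ; rewrite -ge0_fin_numE ?measure_ge0 // ?Mfin ].
rewrite pN_split EFinM fineK //.
have mf : measurable_fun (`[0%R, +oo[%classic : set R) (fN 0).
  by apply: measurable_funS (meas_fN 0).
have step1 : (\int[G]_(s in `[0%R, M%:R%R]%classic) fN 0 s <=
              \int[G]_(s in `[0%R, +oo[%classic) fN 0 s)%E.
  apply: ge0_subset_integral => //.
  - move=> s /=; rewrite in_itv /= andbT => s0; rewrite lee_fin /fN.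
    apply: mulr_ge0; last by rewrite invr_ge0.
    by rewrite expr0 mulr1; exact: expR_ge0.
  - by move=> x /=; rewrite !in_itv /= => /andP [-> _].
apply: le_trans step1.
rewrite -integral_cst //; apply: ge0_le_integral => //.
- by move=> s _; rewrite lee_fin expR_ge0.
- by apply: measurable_funS (meas_fN 0).
move=> s /=; rewrite in_itv /= => /andP [s0 sM].
rewrite /fN lee_fin expr0 mulr1 /= divr1 ler_expR lerN2.
by apply: ler_wpM2l => //; exact: ltW.
Qed.

End P2.

Section P3.
Variables (R : realType) (l : R).

Lemma cm_supp_fin (z : cm l) : finite_set (cm_supp z).
Proof.
case: (cm_fin z) => s hs; apply: (@sub_finite_set _ _ [set` s]).
  by move=> x /= /hs.
exact: finite_seq.
Qed.

Definition sp (z : cm l) : seq R := finmap.enum_fset (fset_set (cm_supp z)).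

Lemma mem_sp z x : (x \in sp z) = (cm_f z x != 0%N).
Proof.
rewrite /sp in_fset_set; last exact: cm_supp_fin.
by apply/idP/idP; rewrite in_setE.
Qed.

Lemma uniq_sp z : uniq (sp z).
Proof. exact: finmap.fset_uniq. Qed.

Lemma fsum_supp (T : Type) (idx : T) (op : Monoid.com_law idx) (z : cm l) (F : R -> T) :
  \big[op/idx]_(x \in cm_supp z) F x = \big[op/idx]_(x <- sp z) F x.
Proof. by rewrite fsbig_finite //; exact: cm_supp_fin. Qed.
Lemma fsumE_supp (z : cm l) (F : R -> \bar R) :
  \big[adde/0%E]_(x \in cm_supp z) F x = (\sum_(x <- sp z) F x)%E.
Proof. exact: (@fsum_supp _ 0%E (@GRing.add (\bar R)) z F). Qed.
Lemma normE (z : cm l) (s : seq R) : uniq s ->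
  (forall y, cm_f z y != 0%N -> y \in s) ->
  cm_norm z = (\sum_(y <- s) cm_f z y)%N.
Proof.
move=> us hs; rewrite /cm_norm /cm_count fsbig_supp.
apply: fsbig_fwiden => //.
  by move=> y [_ /= /eqP h]; exact: hs.
move=> y [/= ys] /not_andP [] /=.
  move=> nS; apply: contra_notP nS => /eqP h; exact: cm_rng h.
by move=> h; apply: contrapT => h2; apply: h => h3; apply: h2.
Qed.

Lemma size_sp (z : cm l) : (size (sp z) <= cm_norm z)%N.
Proof.
rewrite (@normE z (sp z)) ?uniq_sp //; last by move=> y; rewrite mem_sp.
rewrite -sum1_size big_seq [X in (_ <= X)%N]big_seq; apply: leq_sum => i.
by rewrite mem_sp lt0n.
Qed.

Lemma norm_pos_atom (z : cm l) : (0 < cm_norm z)%N -> exists x, cm_f z x != 0%N.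
Proof.
move=> h; apply: contrapT => H.
have H' : forall y, cm_f z y != 0%N -> y \in [::].
  by move=> y hy; exfalso; apply: H; exists y.
by move: h; rewrite (@normE z [::] isT H') big_nil.
Qed.
Lemma norm_rem (z : cm l) x : cm_f z x != 0%N ->
  cm_norm z = (cm_norm (cm_rem z x)).+1.
Proof.
move=> hx.
rewrite (@normE z (sp z)) ?uniq_sp //; last by move=> y; rewrite mem_sp.
rewrite (@normE (cm_rem z x) (sp z)) ?uniq_sp //; last first.
  move=> y /= h; rewrite mem_sp; apply: contraNneq h => ->; by [].
have xs : x \in sp z by rewrite mem_sp.
rewrite (bigD1_seq x) ?uniq_sp //= (bigD1_seq x xs) ?uniq_sp //= eqxx.
rewrite -addSn; congr addn; last first.
  by apply: eq_bigr => y /negbTE ->; rewrite subn0.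
by rewrite subn1 prednK // lt0n.
Qed.

Lemma norm0 (z : cm l) : cm_norm z = 0%N -> forall x, cm_f z x = 0%N.
Proof.
move=> h x; apply/eqP; apply: contraT => hx.
move: h; rewrite (norm_rem z x hx) //.
Qed.

Lemma eq_cm0 (z : cm l) : (forall x, cm_f z x = 0%N) -> z = cm0 l.
Proof.
case: z => f h1 h2 /= hf.
have ef : f = (fun _ => 0%N) by apply: funext.
subst f; congr CM; exact: Prop_irrelevance.
Qed.
End P3.
Arguments sp {R l} z.
Arguments norm_rem {R l} z x.
Arguments norm0 {R l} z.
Arguments eq_cm0 {R l} z.
Arguments size_sp {R l} z.
Arguments norm_pos_atom {R l} z.

Section P4.
Variables (R : realType) (l r : R).
Hypothesis l_gt0 : 0 < l.
Hypothesis r_gt0 : 0 < r.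

Local Notation leb := (@lebesgue_measure R).

Lemma inS_itv : [set x | inS l x] = `[0, l[%classic.
Proof. by apply/seteqP; split => x; rewrite /= in_itv. Qed.

Lemma meas_S : measurable [set x : R | inS l x].
Proof. by rewrite inS_itv; exact: measurable_itv. Qed.

Lemma leb_S : leb (Sset l) = l%:E.
Proof.
rewrite /Sset inS_itv lebesgue_measure_itv /= lte_fin l_gt0 /=.
by rewrite -EFinB subr0.
Qed.

Lemma meas_cdist x : measurable_fun setT (fun y : R => cdist l x y).
Proof.
have h : measurable_fun setT (fun y : R => `|x - y|).
  apply: (measurableT_comp (@normr_measurable R setT)).
  by apply: measurable_funB.
have -> : cdist l x = (fun y => `|x - y|) \min (fun y => l - `|x - y|).
  by apply: funext => y.
by apply: measurable_minr => //; apply: measurable_funB.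
Qed.

Lemma meas_lt (f g : R -> R) : measurable_fun setT f -> measurable_fun setT g ->
  measurable [set y | f y < g y].
Proof.
move=> mf mg; have H := measurable_fun_ltr mf mg measurableT.
have H1 : measurable [set true] by [].
by have := H _ H1; rewrite setTI.
Qed.

Lemma in_bigI (s : seq R) (P : pred R) (F : R -> set R) y :
  (\big[setI/setT]_(i <- s | P i) F i) y <-> (forall i, i \in s -> P i -> F i y).
Proof.
elim: s => [|a s IH]; first by rewrite big_nil; split => // _ i; rewrite in_nil.
rewrite big_cons; case Pa: (P a).
- split.
  + move=> [Fa /IH H] i; rewrite in_cons => /orP [/eqP -> //|iS Pi]; exact: H.
  + move=> H; split; first by apply: H; rewrite ?mem_head.
    by apply/IH => i iS Pi; apply: H => //; rewrite in_cons iS orbT.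
- split.
  + move=> /IH H i; rewrite in_cons => /orP [/eqP ->|iS Pi]; first by rewrite Pa.
    exact: H.
  + by move=> H; apply/IH => i iS Pi; apply: H => //; rewrite in_cons iS orbT.
Qed.

Lemma meas_bigI (s : seq R) (P : pred R) (F : R -> set R) :
  (forall i, measurable (F i)) -> measurable (\big[setI/setT]_(i <- s | P i) F i).
Proof.
move=> mF; elim: s => [|a s IH]; first by rewrite big_nil.
by rewrite big_cons; case: (P a) => //; apply: measurableI.
Qed.

Definition Fset (z : cm l) x := cball l r x `&` vcell z x `&` Sset l.

Lemma qremE z x : qrem r z x = ((l^-1)%:E * leb (Fset z x))%E.
Proof. by []. Qed.

Lemma FsetE z x : Fset z x = Sset l `&` [set y | cdist l x y < r] `&`
  \big[setI/setT]_(x' <- sp z | x' != x) [set y | cdist l x y < cdist l x' y].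
Proof.
apply/seteqP; split => y.
- move=> [[[yS d] [_ hv]] _]; split; first by split.
  by apply/in_bigI => x' x's x'x; apply: hv => //; rewrite -mem_sp.
- move=> [[yS d] /in_bigI H]; split => //; split; split => //.
  by move=> x' hx' x'x; apply: H => //; rewrite mem_sp.
Qed.

Lemma meas_Fset z x : measurable (Fset z x).
Proof.
rewrite FsetE; apply: measurableI; first apply: measurableI.
- exact: meas_S.
- exact: meas_lt (meas_cdist x) (measurable_cst _).
- by apply: meas_bigI => i; exact: meas_lt (meas_cdist x) (meas_cdist i).
Qed.

Lemma Fset_disj (z : cm l) : trivIset [set` sp z] (Fset z).
Proof.
move=> i j hi hj [y [[[_ [_ vi]] _] [[_ [_ vj]] _]]].
have hi' : cm_f z i != 0%N by rewrite -mem_sp.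
have hj' : cm_f z j != 0%N by rewrite -mem_sp.
apply: contrapT => /eqP ij.
have h1 := vi j hj'; rewrite eq_sym in h1; have {h1} h1 := h1 ij.
have h2 := vj i hi' ij.
by move: (lt_trans h1 h2); rewrite ltxx.
Qed.


Lemma sub_bigU (s : seq R) (F : R -> set R) (A : set R) :
  (forall i, F i `<=` A) -> \big[setU/set0]_(i <- s) F i `<=` A.
Proof.
move=> FA; elim: s => [|a s IH]; first by rewrite big_nil.
by rewrite big_cons => y [/FA|/IH].
Qed.

Lemma sumF (z : cm l) :
  \sum_(x <- sp z) leb (Fset z x) = leb (\big[setU/set0]_(x <- sp z) Fset z x).
Proof.
rewrite /sp; apply/esym; apply: measure_fbigsetU.
  by move=> i _; exact: meas_Fset.
exact: Fset_disj.
Qed.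

Lemma qsum_le1 (z : cm l) : (\big[adde/0%E]_(x \in cm_supp z) qrem r z x <= 1)%E.
Proof.
rewrite fsumE_supp.
under eq_bigr do rewrite qremE.
rewrite -ge0_sume_distrr; last by move=> *; exact: measure_ge0.
rewrite sumF.
apply: (@le_trans _ _ ((l^-1)%:E * leb (Sset l))%E).
  apply: lee_wpmul2l; first by rewrite lee_fin invr_ge0 ltW.
  apply: le_measure; rewrite ?inE.
  - by apply: bigsetU_measurable => i _; exact: meas_Fset.
  - exact: meas_S.
  - by apply: sub_bigU => i y [].
by rewrite leb_S -EFinM mulVf ?gt_eqF.
Qed.

Lemma argmin_seq (s : seq R) (f : R -> R) x0 : x0 \in s ->
  exists2 x, x \in s & forall x', x' \in s -> f x <= f x'.
Proof.
elim: s x0 => [|a s IH] x0 //.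
rewrite in_cons => _.
case: s IH => [|b s] IH.
  exists a; first exact: mem_head.
  by move=> x'; rewrite inE => /eqP ->.
have [x xs hx] := IH b (mem_head _ _).
case: (leP (f a) (f x)) => h.
- exists a; first exact: mem_head.
  move=> x'; rewrite in_cons => /orP [/eqP -> //|/hx]; exact: le_trans.
- exists x; first by rewrite in_cons xs orbT.
  by move=> x'; rewrite in_cons => /orP [/eqP ->|/hx //]; exact: ltW.
Qed.

Lemma min_cases (u v : R) : (Num.min u v = u /\ u <= v) \/ (Num.min u v = v /\ v < u).
Proof.
by case: (leP u v) => h; [left; split => //; exact: min_l | right; split => //; try (apply: min_r; exact: ltW)].
Qed.

Lemma abs_cases (a : R) : (`|a| = a /\ 0 <= a) \/ (`|a| = - a /\ a < 0).
Proof.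
by case: (leP 0 a) => h; [left; split => //; exact: ger0_norm | right; split => //; try exact: ltr0_norm].
Qed.

Lemma cdist_le x y : cdist l x y <= `|x - y|.
Proof.
rewrite /cdist; case: (min_cases `|x - y| (l - `|x - y|)) => [[-> _]|[-> h]] //.
exact: ltW.
Qed.

Lemma tie x1 x2 y : inS l x1 -> inS l x2 -> x1 != x2 -> cdist l x1 y = cdist l x2 y ->
  y * 2 = x1 + x2 \/ y * 2 = x1 + x2 + l \/ y * 2 = x1 + x2 - l.
Proof.
move=> /andP[a1 b1] /andP[a2 b2] /eqP ne e.
rewrite /cdist in e.
case: (min_cases `|x1 - y| (l - `|x1 - y|)) => [[m1 h1]|[m1 h1]]; rewrite m1 in e;
case: (min_cases `|x2 - y| (l - `|x2 - y|)) => [[m2 h2]|[m2 h2]]; rewrite m2 in e;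
case: (abs_cases (x1 - y)) => [[n1 k1]|[n1 k1]]; rewrite n1 in e h1;
case: (abs_cases (x2 - y)) => [[n2 k2]|[n2 k2]]; rewrite n2 in e h2;
first [ by left; lra | by right; left; lra | by right; right; lra
      | by exfalso; lra | by exfalso; apply: ne; lra ].
Qed.

Definition dl := Num.min r (l / 2).

Lemma dl_facts : 0 < dl /\ dl <= r /\ dl <= l / 2.
Proof.
rewrite /dl; case: (min_cases r (l / 2)) => [[-> h]|[-> h]]; split.
- exact: r_gt0.
- by split.
- by apply: divr_gt0.
- split => //; exact: ltW.
Qed.

Lemma interval_ex x0 : inS l x0 -> exists a : R,
  forall y, a < y -> y < a + dl -> inS l y /\ cdist l x0 y < r.
Proof.
case: dl_facts => d0 [dr dl2] /andP [x00 x0l].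
have hl : l / 2 + l / 2 = l by rewrite -splitr.
case: (leP (x0 + dl) l) => h.
- exists x0 => y h1 h2; split; first by apply/andP; split; lra.
  apply: (le_lt_trans (cdist_le _ _)).
  rewrite ler0_norm; lra.
- exists (x0 - dl) => y h1 h2; split; first by apply/andP; split; lra.
  apply: (le_lt_trans (cdist_le _ _)).
  rewrite ger0_norm; lra.
Qed.

Definition cand (s : seq R) : seq R :=
  [seq (x1 + x2) / 2 | x1 <- s, x2 <- s] ++ [seq (x1 + x2 + l) / 2 | x1 <- s, x2 <- s]
  ++ [seq (x1 + x2 - l) / 2 | x1 <- s, x2 <- s].

Lemma mem_bigU (s : seq R) (F : R -> set R) y i :
  i \in s -> F i y -> (\big[setU/set0]_(j <- s) F j) y.
Proof.
elim: s => [|a s IH] //; rewrite in_cons big_cons => /orP [/eqP <- h|iS h].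
  by left.
by right; apply: IH.
Qed.

Lemma cover (z : cm l) x0 a : cm_f z x0 != 0%N ->
  (forall y, a < y -> y < a + dl -> inS l y /\ cdist l x0 y < r) ->
  (`]a, a + dl[%classic : set R) `<=`
  (\big[setU/set0]_(x <- sp z) Fset z x) `|` [set` cand (sp z)].
Proof.
move=> hx0 hI y; rewrite /= in_itv /= => /andP [ya yb].
have [yS dy] := hI y ya yb.
have x0s : x0 \in sp z by rewrite mem_sp.
have [x xs hx] := @argmin_seq (sp z) (fun x => cdist l x y) x0 x0s.
have [T|nT] := boolP (y \in cand (sp z)); first by right.
left; apply: (@mem_bigU (sp z) (Fset z) y x xs).
have xS : inS l x by apply: (@cm_rng _ _ z); rewrite -mem_sp.
split; last exact: yS.
split; first by split => //; exact: (le_lt_trans (hx x0 x0s)).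
split => // x' hx' x'x.
have x's : x' \in sp z by rewrite mem_sp.
rewrite lt_neqAle hx // andbT; apply/eqP => e.
have x'S : inS l x' by exact: (@cm_rng _ _ z).
apply: (negP nT).
have xx' : x != x' by rewrite eq_sym.
have [e1|[e1|e1]] := tie x x' y xS x'S xx' e; rewrite /cand !mem_cat.
- have -> : y = (x + x') / 2 by lra.
  by rewrite (allpairs_f (fun x1 x2 => (x1 + x2) / 2) xs x's).
- have -> : y = (x + x' + l) / 2 by lra.
  by rewrite (allpairs_f (fun x1 x2 => (x1 + x2 + l) / 2) xs x's) orbT.
- have -> : y = (x + x' - l) / 2 by lra.
  by rewrite (allpairs_f (fun x1 x2 => (x1 + x2 - l) / 2) xs x's) !orbT.
Qed.

Lemma sum_cst_seq (s : seq R) (c : R) : \sum_(x <- s) c = c *+ size s.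
Proof.
elim: s => [|a s IH]; first by rewrite big_nil.
by rewrite big_cons IH /= mulrS.
Qed.

Lemma big_leb {z : cm l} {N : nat} : (size (sp z) <= N)%N -> (exists x0, cm_f z x0 != 0%N) ->
  exists x, cm_f z x != 0%N /\ ((dl / N.+1%:R)%:E <= leb (Fset z x))%E.
Proof.
move=> hN [x0 hx0].
have x0S : inS l x0 := cm_rng hx0.
have [a ha] := interval_ex x0 x0S.
case: dl_facts => d0 [dr dl2].
have H1 : (dl%:E <= \sum_(x <- sp z) leb (Fset z x))%E.
  rewrite sumF.
  have -> : dl%:E = leb (`]a, a + dl[%classic : set R).
    rewrite lebesgue_measure_itv /= lte_fin ltrDl d0 /= -EFinB; congr EFin; lra.
  have mU : measurable (\big[setU/set0]_(x <- sp z) Fset z x).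
    by apply: bigsetU_measurable => i _; exact: meas_Fset.
  have mC : measurable [set` cand (sp z)].
    apply: countable_measurable; first by move=> t; exact: measurable_set1.
    by apply: finite_set_countable; exact: finite_seq.
  have mI : (`]a, a + dl[%classic : set R) \in measurable.
    by rewrite inE; exact: measurable_itv.
  have mUC : ((\big[setU/set0]_(x <- sp z) Fset z x) `|` [set` cand (sp z)]) \in measurable.
    by rewrite inE; exact: measurableU.
  apply: (le_trans (@le_measure _ _ _ leb _ _ mI mUC (@cover z x0 a hx0 ha))).
  apply: (le_trans (measureU2 leb mU mC)).
  rewrite [X in (_ + X)%E](countable_lebesgue_measure0) ?adde0 //.
  exact: finite_set_countable (finite_seq _).
apply: contrapT => H.
have H2 : forall x, x \in sp z -> (leb (Fset z x) <= (dl / N.+1%:R)%:E)%E.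
  move=> x xs; apply/ltW; rewrite ltNge; apply/negP => h; apply: H; exists x; split => //.
  by rewrite -mem_sp.
have : (\sum_(x <- sp z) leb (Fset z x) <= \sum_(x <- sp z) (dl / N.+1%:R)%:E)%E.
  by rewrite big_seq [X in (_ <= X)%E]big_seq; apply: lee_sum => x; exact: H2.
move=> /(le_trans H1); rewrite sumEFin sum_cst_seq lee_fin.
set w := dl / N.+1%:R; rewrite -mulr_natr.
have hw : w * N.+1%:R = dl by rewrite /w divfK // pnatr_eq0.
have hs : (size (sp z))%:R <= N%:R :> R by rewrite ler_nat.
have hN1 : N.+1%:R = N%:R + 1 :> R by rewrite -addn1 natrD.
rewrite hN1 in hw.
have w0 : 0 < w by rewrite /w divr_gt0 // ltr0n.
move=> h; have hh : w * (size (sp z))%:R <= w * N%:R by rewrite ler_pM2l.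
lra.
Qed.

Definition qq (N : nat) : R := l^-1 * (dl / N.+1%:R).

Lemma qq_facts N : 0 < qq N /\ qq N <= 1.
Proof.
case: dl_facts => d0 [dr dl2].
have k1 : 1 <= N.+1%:R :> R by rewrite ler1n.
set k := N.+1%:R in k1 *.
have w0 : 0 < dl / k by rewrite divr_gt0 // (lt_le_trans ltr01 k1).
have hw : dl / k * k = dl by rewrite divfK // gt_eqF // (lt_le_trans ltr01 k1).
have hm : l^-1 * l = 1 by rewrite mulVf // gt_eqF.
have m0 : 0 < l^-1 by rewrite invr_gt0.
rewrite /qq -/k; split; first exact: mulr_gt0.
set w := dl / k in w0 hw *; set m := l^-1 in hm m0 *.
nra.
Qed.

Lemma qrem_big (z : cm l) (N : nat) : (cm_norm z <= N)%N -> (0 < cm_norm z)%N ->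
  exists x, cm_f z x != 0%N /\ ((qq N)%:E <= qrem r z x)%E.
Proof.
move=> hN hp.
have [x [hx hb]] := big_leb (leq_trans (size_sp z) hN) (norm_pos_atom z hp).
exists x; split => //; rewrite qremE /qq EFinM.
by apply: lee_wpmul2l => //; rewrite lee_fin invr_ge0 ltW.
Qed.

End P4.

Section P5.
Variables (R : realType) (l r lam : R) (G : probability R R).
Hypothesis l_gt0 : 0 < l.
Hypothesis r_gt0 : 0 < r.
Hypothesis lam_gt0 : 0 < lam.
Hypothesis G0 : G `[0, +oo[%classic = 1%E.

Lemma qrem_ge0 (z : cm l) x : (0 <= qrem r z x)%E.
Proof. by rewrite qremE mule_ge0 // ?lee_fin ?invr_ge0 ?ltW // measure_ge0. Qed.

Lemma remop_ge0 (g : cm l -> \bar R) : (forall w, 0 <= g w)%E ->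
  forall z, (0 <= remop r g z)%E.
Proof.
move=> g0 z; rewrite /remop; apply: adde_ge0.
  by rewrite fsumE_supp; apply: sume_ge0 => x _; rewrite mule_ge0 ?qrem_ge0.
apply: mule_ge0 => //; rewrite sube_ge0; last by apply/orP; right.
exact: (@qsum_le1 R l r l_gt0 z).
Qed.

Lemma addop_ge0 (h : cm l -> \bar R) : (forall w, 0 <= h w)%E ->
  forall n z, (0 <= addop n h z)%E.
Proof.
move=> h0; elim => [|n IH] z //=.
apply: mule_ge0; first by rewrite lee_fin invr_ge0 ltW.
by apply: integral_ge0 => x _; exact: IH.
Qed.

Lemma Pop_ge0 (g : cm l -> \bar R) : (forall w, 0 <= g w)%E ->
  forall z, (0 <= Pop r lam G g z)%E.
Proof.
move=> g0 z; apply: nneseries_ge0 => n _ _.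
apply: mule_ge0; first exact: (@pN_ge0 R lam G lam_gt0 G0 n).
by apply: addop_ge0; exact: remop_ge0.
Qed.

Lemma Pk_ge0 k z B : (0 <= Pk l r lam G k z B)%E.
Proof.
elim: k z => [|k IH] z; first by rewrite /Pk /= lee_fin indicE ler0n.
exact: Pop_ge0.
Qed.

Lemma Pop_lb (g : cm l -> \bar R) : (forall w, 0 <= g w)%E ->
  forall z, (pN lam G 0 * remop r g z <= Pop r lam G g z)%E.
Proof.
move=> g0 z; rewrite /Pop.
have := @nneseries_lim_ge R (fun n => pN lam G n * addop n (remop r g) z)%E xpredT 0 1.
rewrite big_nat1 /=; apply => n _ _.
apply: mule_ge0; first exact: (@pN_ge0 R lam G lam_gt0 G0 n).
by apply: addop_ge0; exact: remop_ge0.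
Qed.

Lemma remop_lb (g : cm l -> \bar R) : (forall w, 0 <= g w)%E ->
  forall z x, cm_f z x != 0%N -> (qrem r z x * g (cm_rem z x) <= remop r g z)%E.
Proof.
move=> g0 z x hx; rewrite /remop (@fsumE_supp R l z (fun y => qrem r z y * g (cm_rem z y))%E).
have xs : x \in sp z by rewrite mem_sp.
have h2 : (0 <= (1 - \big[adde/0%E]_(y \in cm_supp z) qrem r z y) * g z)%E.
  apply: mule_ge0 => //; rewrite sube_ge0; last by apply/orP; right.
  exact: (@qsum_le1 R l r l_gt0 z).
have h1 : (0 <= \sum_(i <- sp z | i != x) qrem r z i * g (cm_rem z i))%E.
  by apply: sume_ge0 => y _; rewrite mule_ge0 ?qrem_ge0.
rewrite (bigD1_seq x xs (@uniq_sp R l z)) /=.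
apply: le_trans (leeDl _ h2).
exact: leeDl h1.
Qed.

Lemma remop_cm0 (g : cm l -> \bar R) : remop r g (cm0 l) = g (cm0 l).
Proof.
rewrite /remop !fsumE_supp !big1_seq ?add0e ?sube0 ?mul1e //.
- by move=> i; rewrite mem_sp.
- by move=> i; rewrite mem_sp.
Qed.

Lemma norm_cm0 : cm_norm (cm0 l) = 0%N.
Proof. by rewrite (@normE R l (cm0 l) [::]) ?big_nil. Qed.

Lemma Pk_lb (N : nat) (p0 : R) : 0 < p0 -> (p0%:E <= pN lam G 0)%E ->
  forall k (z : cm l) B, (cm_norm z <= k)%N -> (k <= N)%N ->
  (((p0 * @qq R l r N) ^+ k)%:E * (\1_B (cm0 l))%:E <= Pk l r lam G k z B)%E.
Proof.
move=> p00 hp0.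
have [q0 q1] := @qq_facts R l r l_gt0 r_gt0 N.
set q := @qq R l r N in q0 q1 *.
set c := p0 * q.
have c0 : 0 <= c by rewrite /c mulr_ge0 // ltW.
have cp : c <= p0.
  by rewrite /c -[X in _ <= X](mulr1 p0); apply: ler_wpM2l => //; exact: ltW.
elim => [|k IH] z B hz hk.
  have e0 : cm_norm z = 0%N by apply/eqP; rewrite -leqn0.
  by rewrite (eq_cm0 z (norm0 z e0)) /Pk /= expr0 mul1e.
have ind0 : 0 <= (\1_B (cm0 l) : R) by rewrite indicE ler0n.
set g := iter k (Pop r lam G) (fun y => (\1_B y)%:E).
have g0 : forall w, (0 <= g w)%E by move=> w; exact: (Pk_ge0 k w B).
have ck0 : 0 <= c ^+ k * (\1_B (cm0 l) : R) by rewrite mulr_ge0 // exprn_ge0.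
rewrite /Pk /=; apply: le_trans (@Pop_lb g g0 z).
have [hz0|hz0] := posnP (cm_norm z).
  rewrite (eq_cm0 z (norm0 z hz0)) remop_cm0.
  have IH' := IH (cm0 l) B ltac:(by rewrite norm_cm0) (ltnW hk).
  apply: (@le_trans _ _ (p0%:E * ((c ^+ k)%:E * (\1_B (cm0 l))%:E))%E).
    rewrite -!EFinM lee_fin exprS -mulrA.
    by apply: ler_wpM2r.
  by apply: lee_pmul => //; rewrite ?lee_fin ?ltW // -EFinM lee_fin.
have hzN : (cm_norm z <= N)%N by apply: leq_trans hz hk.
have [x [hx hq]] := @qrem_big R l r l_gt0 r_gt0 z N hzN hz0.
have hr : (cm_norm (cm_rem z x) <= k)%N.
  by move: hz; rewrite (norm_rem z x hx).
have IH' := IH (cm_rem z x) B hr (ltnW hk).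
apply: (@le_trans _ _ (p0%:E * (q%:E * ((c ^+ k)%:E * (\1_B (cm0 l))%:E)))%E).
  by rewrite -!EFinM lee_fin exprS /c !mulrA.
apply: lee_pmul.
- by rewrite lee_fin ltW.
- by rewrite -!EFinM lee_fin mulr_ge0 // ltW.
- exact: hp0.
apply: le_trans (@remop_lb g g0 z x hx).
apply: lee_pmul.
- by rewrite lee_fin ltW.
- by rewrite -EFinM lee_fin.
- exact: hq.
- exact: IH'.
Qed.

End P5.

Theorem lemma1 (R : realType) (l r lam : R) (G : probability R R) :
  0 < l -> 0 < r -> 0 < lam ->
  G `[0, +oo[%classic = 1%E ->
  G.-integrable setT (fun s : R => s%:E) ->
  phi_irreducible l r lam G (dirac_cm0 l) /\
  strongly_aperiodic l r lam G /\
  (forall n : nat, small_set l r lam G [set z : cm l | (cm_norm z <= n)%N]).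
Proof.
move=> l0 r0 lam0 G0 _.
have [p0 [p00 hp0]] := @pN0_pos R lam G lam0 G0.
have cpos : forall N, 0 < p0 * @qq R l r N.
  by move=> N; apply: mulr_gt0 => //; case: (@qq_facts R l r l0 r0 N).
have Hlb := @Pk_lb R l r lam G l0 r0 lam0 G0.
have nu_pos : forall N k, (0 < ((p0 * @qq R l r N) ^+ k)%:E * dirac_cm0 l [set z : cm l | (cm_norm z <= 0)%N])%E.
  move=> N k; rewrite /dirac_cm0 indicE mem_set /=; last by rewrite (@norm_cm0 R l).
  by rewrite mule1 lte_fin exprn_gt0.
have nu_meas : forall N k, is_measure_on (@cm_meas R l)
    (fun B => (((p0 * @qq R l r N) ^+ k)%:E * dirac_cm0 l B)%E).
  by move=> N k; apply: dirac_meas; rewrite exprn_ge0 // ltW.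
split; [|split].
- move=> B _ hB z; exists (cm_norm z).+1; split => //.
  apply: lt_le_trans (Hlb (cm_norm z).+1 p0 p00 hp0 _ z B (leqnSn _) (leqnn _)).
  by apply: mule_gt0 => //; rewrite lte_fin exprn_gt0.
- exists [set z : cm l | (cm_norm z <= 0)%N]; split; first exact: level_meas.
  exists (fun B => (((p0 * @qq R l r 1) ^+ 1)%:E * dirac_cm0 l B)%E).
  split; first exact: nu_meas.
  split; first exact: nu_pos.
  move=> z B hz _.
  exact: (Hlb 1%N p0 p00 hp0 1%N z B (leq_trans hz (leq0n 1)) (leqnn 1)).
- move=> n; split; first exact: level_meas.
  exists n.+1; split => //.
  exists (fun B => (((p0 * @qq R l r n.+1) ^+ n.+1)%:E * dirac_cm0 l B)%E).
  split; first exact: nu_meas.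
  split.
    exists [set z : cm l | (cm_norm z <= 0)%N]; split; first exact: level_meas.
    exact: nu_pos.
  move=> z B hz _.
  exact: (Hlb n.+1 p0 p00 hp0 n.+1 z B (leqW hz) (leqnn _)).
Qed.
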